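(* Let $k\ge 4$ be even and let $G=(V,E)$ be a $k$-uniform cored hypergraph, with Laplacian tensor $\mathcal L$ and signless Laplacian tensor $\mathcal Q$. Then $G$ is odd-bipartite, and hence $\lambda(\mathcal L)=\lambda(\mathcal Q)$.
   Context: A $k$-uniform hypergraph $G=(V,E)$ ($k\ge 3$) is a simple undirected hypergraph with vertex set $V=[n]$ ($n\ge k$) and a nonempty edge set $E$ of $k$-element subsets of $V$. The degree $d_i$ of vertex $i$ is the number of edges containing $i$. $G$ is a cored hypergraph if every edge $e\in E$ contains a vertex of degree one. The adjacency tensor $\mathcal A$ is the order-$k$, dimension-$n$ tensor with $a_{i_1\ldots i_k}=\frac{1}{(k-1)!}$ if $\{i_1,\ldots,i_k\}\in E$ and $0$ otherwise; $\mathcal D$ is the diagonal tensor with $d_{i\ldots i}=d_i$; $\mathcal L=\mathcal D-\mathcal A$ and $\mathcal Q=\mathcal D+\mathcal A$. For a real order-$k$ dimension-$n$ tensor $\mathcal T$ and $\mathbf x\in\mathbb R^n$, $\mathcal T\mathbf x^{k-1}\in\mathbb R^n$ has $i$-th entry $\sum_{i_2,\ldots,i_k\in[n]}t_{ii_2\ldots i_k}x_{i_2}\cdots x_{i_k}$. A real $\lambda$ is an H-eigenvalue of $\mathcal T$ if there is $\mathbf x\in\mathbb R^n\setminus\{0\}$ (an H-eigenvector) with $(\mathcal T\mathbf x^{k-1})_i=\lambda x_i^{k-1}$ for all $i$; $\lambda(\mathcal T)$ denotes the largest H-eigenvalue. For even $k$, $G$ is odd-bipartite if there is a partition $V=V_1\cup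 V_2$ with $V_1,V_2\neq\emptyset$ disjoint such that every edge meets $V_1$ in an odd number of vertices. *)

(* Defs.v *)
From HB Require Import structures.
From mathcomp Require Import all_boot all_order all_algebra.
Unset Printing Implicit Defensive.
Import Order.TTheory GRing.Theory Num.Theory.
Local Open Scope ring_scope.

Definition uniform_hypergraph {n : nat} (k : nat) (E : {set {set 'I_n}}) : Prop :=
  [/\ (3 <= k)%N, (k <= n)%N, E != set0 & forall e, e \in E -> #|e| = k].

Definition hdeg {n : nat} (E : {set {set 'I_n}}) (i : 'I_n) : nat :=
  #|[set e in E | i \in e]|.

Definition cored {n : nat} (E : {set {set 'I_n}}) : Prop :=
  forall e, e \in E -> exists2 i, i \in e & hdeg E i = 1%N.

Definition odd_bipartite {n : nat} (E : {set {set 'I_n}}) : Prop :=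
  exists V1 : {set 'I_n},
    [/\ V1 != set0, ~: V1 != set0 &
        forall e, e \in E -> odd #|e :&: V1|].

(* An order-k, dimension-n real tensor: the entry t_{i i_2 ... i_k} is
   T i f where f : {ffun 'I_k.-1 -> 'I_n} lists (i_2, ..., i_k). *)
Definition tensor (R : Type) (n k : nat) := 'I_n -> {ffun 'I_k.-1 -> 'I_n} -> R.

Definition tapply {R : realFieldType} {n k : nat} (T : tensor R n k)
  (x : 'I_n -> R) (i : 'I_n) : R :=
  \sum_(f : {ffun 'I_k.-1 -> 'I_n}) T i f * \prod_(j < k.-1) x (f j).

Definition adj_tensor (R : realFieldType) {n : nat} (k : nat) (E : {set {set 'I_n}})
  : tensor R n k :=
  fun i f => if (i |: [set f j | j in 'I_k.-1]) \in E
             then ((k.-1)`!%:R)^-1 else 0.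

Definition deg_tensor (R : realFieldType) {n : nat} (k : nat) (E : {set {set 'I_n}})
  : tensor R n k :=
  fun i f => if [forall j, f j == i] then (hdeg E i)%:R else 0.

Definition lap_tensor (R : realFieldType) {n : nat} (k : nat) (E : {set {set 'I_n}})
  : tensor R n k := fun i f => deg_tensor R k E i f - adj_tensor R k E i f.

Definition slap_tensor (R : realFieldType) {n : nat} (k : nat) (E : {set {set 'I_n}})
  : tensor R n k := fun i f => deg_tensor R k E i f + adj_tensor R k E i f.

Definition H_eigenvalue {R : realFieldType} {n k : nat} (T : tensor R n k)
  (lam : R) : Prop :=
  exists x : 'I_n -> R, (exists i, x i != 0) /\
    forall i, tapply T x i = lam * x i ^+ k.-1.

Definition largest_H_eigenvalue {R : realFieldType} {n k : nat}
  (T : tensor R n k) (lam : R) : Prop :=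
  H_eigenvalue T lam /\ forall mu, H_eigenvalue T mu -> mu <= lam.

(* Main.v *)
Require Import Defs.
From HB Require Import structures.
From mathcomp Require Import all_boot all_order all_algebra.
From mathcomp Require Import ring.
Import Order.TTheory GRing.Theory Num.Theory.
Local Open Scope ring_scope.

Section S.
Variables (R : realFieldType) (n k : nat) (E : {set {set 'I_n}}) (V1 : {set 'I_n}).
Hypothesis Ek : forall e, e \in E -> #|e| = k.
Hypothesis Vodd : forall e, e \in E -> odd #|e :&: V1|.
Hypothesis kev : ~~ odd k.
Hypothesis k1 : (1 <= k)%N.

Definition sg (v : 'I_n) : R := if v \in V1 then -1 else 1.

Lemma sg2 v : sg v * sg v = 1.
Proof. by rewrite /sg; case: (v \in V1); rewrite ?mulrNN mulr1. Qed.

Lemma sg_prod_e e : e \in E -> \prod_(v in e) sg v = -1.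
Proof.
move=> He; rewrite (big_setID V1) /=.
rewrite (eq_bigr (fun _ => -1)); last by move=> v; rewrite !inE /sg; case: (v \in V1); rewrite ?andbF.
rewrite [X in _ * X](eq_bigr (fun _ => 1)); last by move=> v; rewrite !inE /sg; case: (v \in V1); rewrite ?andbF.
rewrite prodr_const big1_eq mulr1 -signr_odd.
by rewrite (Vodd _ He) expr1.
Qed.

Lemma adj_sg i (f : {ffun 'I_k.-1 -> 'I_n}) :
  adj_tensor R k E i f * \prod_(j < k.-1) sg (f j) = - (sg i * adj_tensor R k E i f).
Proof.
rewrite /adj_tensor; case: ifP => He; last by rewrite !mul0r mulr0 oppr0.
set S := (X in _ |: X \in E) in He *.
have Hk := Ek _ He; rewrite cardsU1 in Hk.
have hS : (#|S| <= k.-1)%N by rewrite (leq_trans (leq_imset_card _ _)) // card_ord.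
have iS : i \notin S.
  apply/negP => Hi; rewrite Hi /= add0n in Hk; move: hS; rewrite Hk; case: k k1 => // m _ /=; by rewrite ltnn.
have cS : #|S| = k.-1 by rewrite iS add1n in Hk; rewrite -Hk.
have inj : {in 'I_k.-1 &, injective f}.
  by apply/imset_injP; rewrite cS card_ord.
have := sg_prod_e _ He; rewrite big_setU1 //= big_imset //= => H0.
have H : sg i * \prod_(j < k.-1) sg (f j) = -1 by rewrite -H0; congr (_ * _); apply: eq_bigl.
have -> : \prod_(j < k.-1) sg (f j) = - sg i.
  by have := congr1 (fun z => sg i * z) H; rewrite /= mulrA sg2 mul1r mulrN1.
by rewrite mulrN mulrC.
Qed.

Lemma deg_sg i (f : {ffun 'I_k.-1 -> 'I_n}) :
  deg_tensor R k E i f * \prod_(j < k.-1) sg (f j) = sg i * deg_tensor R k E i f.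
Proof.
rewrite /deg_tensor; case: ifP => Hf; last by rewrite mul0r mulr0.
rewrite (eq_bigr (fun _ => sg i)); last by move=> j _; move/forallP: Hf => /(_ j) /eqP ->.
rewrite prodr_const card_ord mulrC; congr (_ * _).
case: k kev k1 => // m /= Hm _.
rewrite negbK in Hm.
by rewrite -(odd_double_half m) Hm add1n exprS -mul2n exprM expr2 sg2 expr1n mulr1.
Qed.

Definition flip (x : 'I_n -> R) (v : 'I_n) := sg v * x v.

Lemma tapply_flip (b : bool) (x : 'I_n -> R) i :
  tapply (fun i f => deg_tensor R k E i f + (if b then -1 else 1) * adj_tensor R k E i f) (flip x) i =
  sg i * tapply (fun i f => deg_tensor R k E i f - (if b then -1 else 1) * adj_tensor R k E i f) x i.
Proof.
rewrite /tapply mulr_sumr; apply: eq_bigr => f _.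
rewrite /flip big_split /=.
move: (deg_sg i f) (adj_sg i f).
set D := deg_tensor _ _ _ _ _; set A := adj_tensor _ _ _ _ _.
set P := \prod_(j < k.-1) sg (f j); set X := \prod_(j < k.-1) x (f j).
set c := (if b then -1 else 1) => HD HA.
transitivity ((D * P + c * (A * P)) * X); first ring.
rewrite HD HA; ring.
Qed.

Lemma sgX i : sg i ^+ k.-1 = sg i.
Proof.
case: k kev k1 => // m /= Hm _; rewrite negbK in Hm.
by rewrite -(odd_double_half m) Hm add1n exprS -mul2n exprM expr2 sg2 expr1n mulr1.
Qed.

Lemma tapply_ext (T1 T2 : tensor R n k) x i :
  (forall i f, T1 i f = T2 i f) -> tapply T1 x i = tapply T2 x i.
Proof. by move=> H; apply: eq_bigr => f _; rewrite H. Qed.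

Lemma eig_transfer (b : bool) lam :
  H_eigenvalue (fun i f => deg_tensor R k E i f - (if b then -1 else 1) * adj_tensor R k E i f) lam ->
  H_eigenvalue (fun i f => deg_tensor R k E i f + (if b then -1 else 1) * adj_tensor R k E i f) lam.
Proof.
move=> [x [[i0 Hi0] Hx]]; exists (flip x); split.
  exists i0; rewrite /flip mulf_eq0 negb_or Hi0 andbT.
  by apply/eqP => H; have := sg2 i0; rewrite H mul0r => /eqP; rewrite eq_sym oner_eq0.
move=> i; rewrite tapply_flip Hx /flip exprMn sgX; ring.
Qed.

Lemma eig_equiv lam :
  H_eigenvalue (lap_tensor R k E) lam <-> H_eigenvalue (slap_tensor R k E) lam.
Proof.
split => H.
- have := eig_transfer false lam.
  move=> /(_ _) H'; case: H' => [|x [Hx1 Hx2]].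
    by case: H => x [Hx1 Hx2]; exists x; split=> // i; rewrite -Hx2; apply: tapply_ext => j f; rewrite mul1r.
  by exists x; split=> // i; rewrite -Hx2; apply: tapply_ext => j f; rewrite mul1r.
- have := eig_transfer true lam.
  move=> /(_ _) H'; case: H' => [|x [Hx1 Hx2]].
    by case: H => x [Hx1 Hx2]; exists x; split=> // i; rewrite -Hx2; apply: tapply_ext => j f; rewrite /slap_tensor mulN1r opprK.
  by exists x; split=> // i; rewrite -Hx2; apply: tapply_ext => j f; rewrite /lap_tensor mulN1r.
Qed.

End S.
Lemma deg1_uniq {n : nat} (E : {set {set 'I_n}}) v e e' :
  hdeg E v = 1%N -> e \in E -> v \in e -> e' \in E -> v \in e' -> e = e'.
Proof.
rewrite /hdeg => /eqP/cards1P [e0 He0] He Hve He' Hve'.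
have : e \in [set e in E | v \in e] by rewrite inE He Hve.
have : e' \in [set e in E | v \in e] by rewrite inE He' Hve'.
by rewrite He0 !inE => /eqP -> /eqP ->.
Qed.

Lemma cored_odd_bip {n : nat} (k : nat) (E : {set {set 'I_n}}) :
  uniform_hypergraph k E -> (4 <= k)%N -> cored E -> odd_bipartite E.
Proof.
move=> [k3 kn En0 Ek] k4 Hc.
pose pk (e : {set 'I_n}) := [pick i in e | hdeg E i == 1%N].
have pkP : forall e, e \in E -> exists2 v, pk e = Some v & (v \in e) && (hdeg E v == 1%N).
  move=> e He; rewrite /pk; case: pickP => [v Hv|H0]; first by exists v.
  by case: (Hc e He) => i Hi Hd; move: (H0 i); rewrite Hi Hd eqxx.
pose V1 := [set v | [exists e in E, pk e == Some v]].
have key : forall e, e \in E -> exists v, e :&: V1 = [set v].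
  move=> e He; case: (pkP e He) => v Hpv /andP [Hve Hdv]; exists v.
  apply/setP => w; rewrite !inE; apply/andP/eqP => [[Hwe /existsP [e' /andP [He' /eqP Hpw]]]|->].
    case: (pkP e' He') => w' Hpw' /andP [Hw'e' Hdw'].
    move: Hpw; rewrite Hpw' => -[Hww']; subst w'.
    have ee' := @deg1_uniq _ E _ _ _ (eqP Hdw') He Hwe He' Hw'e'; subst e'.
    by move: Hpv; rewrite Hpw' => -[].
  split=> //; apply/existsP; exists e; by rewrite He Hpv eqxx.
exists V1; split.
- case/set0Pn: En0 => e He; case: (key e He) => v Hv.
  apply/set0Pn; exists v; have : v \in e :&: V1 by rewrite Hv set11.
  by rewrite inE => /andP [].
- apply/negP => /eqP H; case/set0Pn: En0 => e He; case: (key e He) => v Hv.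
  have : V1 = setT by apply/setP => x; move/setP: H => /(_ x); rewrite in_setC in_set0 in_setT; by case: (x \in V1).
  move=> HT; move: Hv; rewrite HT setIT => Hev.
  by move: (Ek e He); rewrite Hev cards1 => Hk; rewrite -Hk in k4.
- by move=> e He; case: (key e He) => v ->; rewrite cards1.
Qed.

Theorem proposition3p2 (R : realFieldType) (n k : nat) (E : {set {set 'I_n}}) :
  uniform_hypergraph k E -> (4 <= k)%N -> ~~ odd k -> cored E ->
  odd_bipartite E /\
  (forall lam : R, largest_H_eigenvalue (lap_tensor R k E) lam <->
                   largest_H_eigenvalue (slap_tensor R k E) lam).
Proof.
move=> Hu k4 kev Hc.
have Hob := @cored_odd_bip n k E Hu k4 Hc.
split=> //.
case: Hob => V1 [_ _ Vodd].
case: Hu => _ _ _ Ek.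
have k1 : (1 <= k)%N by apply: leq_trans k4.
have EQ := fun mu => @eig_equiv R n k E V1 Ek Vodd kev k1 mu.
move=> lam; rewrite /largest_H_eigenvalue; split=> -[H1 H2]; split.
- by apply/EQ.
- by move=> mu /EQ; apply: H2.
- by apply/EQ.
- by move=> mu /EQ; apply: H2.
Qed.
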